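(* Let $A\in\mathbb{R}^{n\times n}$ and $b\in\mathbb{R}^n$, and consider the generalized Newton method (GNM) for the absolute value equation $Ax-|x|-b=0$: starting from an initial $x^0\in\mathbb{R}^n$, compute $x^{k+1}=[A-\mathcal{D}(x^k)]^{-1}b$ for $k=0,1,2,\dots$. Suppose that $A$ satisfies either (a) $A-I$ is an $M$-matrix, or (b) $\mathcal{N}(A^\top-I)=\mathrm{span}(v)$ for some vector $v>0$, and $A-I+D$ is an $M$-matrix for every diagonal matrix $D=\mathrm{diag}(d)$ with $d\ge 0$ and $d\neq 0$. If $A$ satisfies (b), assume in addition that $\mathcal{D}(x^0)\neq I$ and $v^\top b<0$. Then GNM converges to an exact solution of $Ax-|x|-b=0$ in at most $2n+2$ iterations.
   Context: For $x\in\mathbb{R}^n$, $|x|=(|x_1|,\dots,|x_n|)^\top$, and $\mathcal{D}(x)=\mathrm{diag}(\mathrm{sign}(x))$, where $\mathrm{sign}(x)$ is the vector whose $i$th component is $-1$, $0$, or $1$ according as $x_i<0$, $x_i=0$, or $x_i>0$. A matrix is a $Z$-matrix if all its off-diagonal entries are $\le 0$; a $Z$-matrix $A$ is an $M$-matrix if $A$ is nonsingular and $A^{-1}\ge 0$ (entrywise). Vector and matrix inequalities are entrywise; $v>0$ means all entries of $v$ are strictly positive. $\mathcal{N}(X)$ denotes the null space of $X$. *)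

(* Defs.v *)
From mathcomp Require Import all_boot all_order all_algebra.
Set Implicit Arguments. Unset Strict Implicit. Unset Printing Implicit Defensive.
Import Order.TTheory GRing.Theory Num.Theory.
Local Open Scope ring_scope.

Definition absv (R : realFieldType) (n : nat) (x : 'cV[R]_n) : 'cV[R]_n :=
  \col_i `|x i 0|.

Definition Dsign (R : realFieldType) (n : nat) (x : 'cV[R]_n) : 'M[R]_n :=
  diag_mx (\row_i Num.sg (x i 0)).

Definition Zmatrix (R : realFieldType) (n : nat) (A : 'M[R]_n) : Prop :=
  forall i j : 'I_n, i != j -> A i j <= 0.

Definition Mmatrix (R : realFieldType) (n : nat) (A : 'M[R]_n) : Prop :=
  [/\ Zmatrix A, A \in unitmx & forall i j, 0 <= invmx A i j].

Fixpoint gnm (R : realFieldType) (n : nat) (A : 'M[R]_n) (b x0 : 'cV[R]_n)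
  (k : nat) : 'cV[R]_n :=
  match k with
  | 0 => x0
  | k'.+1 => invmx (A - Dsign (gnm A b x0 k')) *m b
  end.

Definition AVE_sol (R : realFieldType) (n : nat) (A : 'M[R]_n) (b x : 'cV[R]_n)
  : Prop := A *m x - absv x - b = 0.

(* Main.v *)
Require Import Defs.
From mathcomp Require Import all_boot all_order all_algebra lra.
From Stdlib Require Import Classical.
From mathcomp Require Import zify.
Import Order.TTheory GRing.Theory Num.Theory.
Local Open Scope ring_scope.

Section Helpers.
Variables (R : realFieldType) (n : nat).

Lemma mulmx_col_entry (M : 'M[R]_n) (x : 'cV[R]_n) i :
  (M *m x) i 0 = \sum_j M i j * x j 0.
Proof. by rewrite mxE. Qed.

Lemma semipos_mono (M : 'M[R]_n) (u : 'cV[R]_n) :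
  Zmatrix M -> (forall i, 0 < u i 0) -> (forall i, 0 < (M *m u) i 0) ->
  forall x : 'cV[R]_n, (forall i, 0 <= (M *m x) i 0) -> forall i, 0 <= x i 0.
Proof.
move=> HZ Hu HMu x Hx i; rewrite leNgt; apply/negP => xi_neg.
pose F j := x j 0 / u j 0.
case: (@arg_minP _ R _ i xpredT F isT) => m _ Hm.
set t := F m.
have tneg : t < 0.
  apply: (le_lt_trans (Hm i isT)); rewrite /F pmulr_llt0 //.
  by rewrite invr_gt0.
have Hge : forall j, t * u j 0 <= x j 0.
  by move=> j; rewrite -ler_pdivlMr // (Hm j isT).
have Heq : x m 0 = t * u m 0 by rewrite /t /F divfK // gt_eqF.
have : (M *m x) m 0 = t * (M *m u) m 0 + \sum_j M m j * (x j 0 - t * u j 0).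
  rewrite !mxE mulr_sumr -big_split /=; apply: eq_bigr => j _.
  by rewrite mulrBr mulrCA addrC subrK.
move=> E; have := Hx m; rewrite E; apply/negP; rewrite -ltNge.
have h1 : t * (M *m u) m 0 < 0 by rewrite nmulr_rlt0.
suff h2 : \sum_j M m j * (x j 0 - t * u j 0) <= 0 by lra.
rewrite sumr_le0 // => j _.
case: (eqVneq m j) => [<-|mj]; first by rewrite Heq subrr mulr0.
by rewrite mulr_le0_ge0 ?HZ // subr_ge0.
Qed.

Lemma semipos_M (M : 'M[R]_n) (u : 'cV[R]_n) :
  Zmatrix M -> (forall i, 0 < u i 0) -> (forall i, 0 < (M *m u) i 0) ->
  Mmatrix M.
Proof.
move=> HZ Hu HMu; have mono := @semipos_mono M u HZ Hu HMu.
have unit : M \in unitmx.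
  rewrite -unitmx_tr -row_free_unit -kermx_eq0; apply/eqP/row_matrixP => r.
  set y := row r (kermx M^T).
  have Hy : y *m M^T = 0 by rewrite /y -row_mul mulmx_ker row0.
  have HMy : M *m y^T = 0 by rewrite -[LHS]trmxK trmx_mul trmxK Hy trmx0.
  apply/rowP => j; rewrite [RHS]mxE; apply/eqP; rewrite eq_le.
  have h1 := mono y^T; have h2 := mono (- y^T).
  rewrite HMy in h1; rewrite mulmxN HMy oppr0 in h2.
  have a1 : forall i, 0 <= (0 : 'cV[R]_n) i 0 by move=> i; rewrite mxE.
  have := h1 a1 j; have := h2 a1 j.
  by rewrite !mxE oppr_ge0 => -> ->.
split=> // i j.
have -> : invmx M i j = (col j (invmx M)) i 0 by rewrite mxE.
apply: mono => k; rewrite colE mulKVmx // mxE.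
by case: (_ == _) (_ == _) => [] [].
Qed.


Lemma Mmatrix_add_diag (M : 'M[R]_n) (d : 'rV[R]_n) :
  Mmatrix M -> (forall i, 0 <= d 0 i) -> Mmatrix (M + diag_mx d).
Proof.
case=> HZ HU Hinv Hd.
pose u : 'cV[R]_n := invmx M *m const_mx 1.
have Hu : forall i, 0 < u i 0.
  move=> i; rewrite mxE lt_def sumr_ge0 ?andbT; last first.
    by move=> j _; rewrite mxE mulr1.
  apply/eqP => H0.
  have Z : forall j, invmx M i j = 0.
    move=> j; have := @psumr_eq0P R _ xpredT (fun k => invmx M i k * const_mx 1 k 0) _ H0 j isT.
    rewrite mxE mulr1; apply; move=> k _; rewrite mxE mulr1; exact: Hinv.
  have := mulVmx HU; move/matrixP/(_ i i).
  rewrite !mxE eqxx /= big1 ?(@oner_eq0 R) //; last by move=> k _; rewrite Z mul0r.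
  by move=> /esym/eqP; rewrite oner_eq0.
apply: (@semipos_M (M + diag_mx d) u) => //.
  move=> i j ij; rewrite !mxE (negbTE ij) mulr0n addr0; exact: HZ.
move=> i; rewrite mulmxDl /u mulKVmx // mul_diag_mx !mxE.
rewrite ltr_pwDl // mulr_ge0 //; have := Hu i; rewrite /u mxE => h; exact: ltW.
Qed.

Lemma Dsign_mul (x y : 'cV[R]_n) i : (Dsign x *m y) i 0 = Num.sg (x i 0) * y i 0.
Proof. by rewrite /Dsign mul_diag_mx !mxE. Qed.

Lemma A_Dsign_eq (A : 'M[R]_n) (x : 'cV[R]_n) :
  A - Dsign x = A - 1%:M + diag_mx (\row_i (1 - Num.sg (x i 0))).
Proof.
apply/matrixP => i j; rewrite !mxE; case: (eqVneq i j) => [<-|ij] /=.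
  by rewrite !mulr1n; lra.
by rewrite /= !mulr0n; lra.
Qed.

Lemma Dsign_eq1 (x : 'cV[R]_n) : Dsign x = 1%:M <-> forall i, Num.sg (x i 0) = 1.
Proof.
split.
  by move=> /matrixP H i; have := H i i; rewrite !mxE eqxx !mulr1n.
move=> H; apply/matrixP => i j; rewrite !mxE H.
by case: (i == j).
Qed.

Lemma sg_le1 (a : R) : Num.sg a <= 1.
Proof. by case: sgrP => _; lra. Qed.

Lemma sg_geN1 (a : R) : -1 <= Num.sg a.
Proof. by case: sgrP => _; lra. Qed.

Lemma sg_step (a c : R) : a <= c -> Num.sg a != Num.sg c -> Num.sg a + 1 <= Num.sg c.
Proof.
move=> ac; case: sgrP => ha; case: sgrP => hc //=; try lra.
all: move=> _; exfalso; lra.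
Qed.

Lemma abs_sg (a s : R) : `|s| <= 1 -> s * a <= Num.sg a * a.
Proof.
move=> /ler_normlP [h1 h2]; case: sgrP => ha; nra.
Qed.

Lemma Mmatrix_nonneg (M : 'M[R]_n) (z : 'cV[R]_n) :
  Mmatrix M -> (forall i, 0 <= (M *m z) i 0) -> forall i, 0 <= z i 0.
Proof.
case=> _ HU Hinv Hz i; rewrite -(mulKmx HU z) mxE sumr_ge0 // => j _.
by rewrite mulr_ge0.
Qed.

Lemma step_mono (A : 'M[R]_n) (b y : 'cV[R]_n) :
  let x' := invmx (A - Dsign y) *m b in
  Mmatrix (A - Dsign y) -> Mmatrix (A - Dsign x') ->
  forall i, x' i 0 <= (invmx (A - Dsign x') *m b) i 0.
Proof.
move=> x' H1 H2 i; rewrite -subr_ge0.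
have -> : (invmx (A - Dsign x') *m b) i 0 - x' i 0 =
          (invmx (A - Dsign x') *m b - x') i 0 by rewrite !mxE.
apply: (@Mmatrix_nonneg _ _ H2) => k.
rewrite mulmxBr mulKVmx; last by case: H2.
have {1}-> : b = (A - Dsign y) *m x' by rewrite /x' mulKVmx //; case: H1.
rewrite -mulmxBl opprB addrC addrA subrK mulmxBl mxE !Dsign_mul.
have -> : (- (Dsign y *m x')) k 0 = - (Dsign y *m x') k 0 by rewrite mxE.
rewrite Dsign_mul subr_ge0.
apply: abs_sg; apply/ler_normlP; split; last exact: sg_le1.
by rewrite lerNl; apply: sg_geN1.
Qed.

Lemma step_sol (A : 'M[R]_n) (b y : 'cV[R]_n) :
  let x' := invmx (A - Dsign y) *m b in
  A - Dsign y \in unitmx -> (forall i, Num.sg (x' i 0) = Num.sg (y i 0)) ->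
  AVE_sol A b x'.
Proof.
move=> x' HU Hs; rewrite /AVE_sol.
have {1}-> : b = (A - Dsign y) *m x' by rewrite /x' mulKVmx.
rewrite mulmxBl opprB addrC addrA subrK.
have E1 : forall (M N : 'cV[R]_n) i, (M - N) i 0 = M i 0 - N i 0 by move=> *; rewrite !mxE.
apply/matrixP => i j; rewrite (ord1 j) E1 Dsign_mul -Hs /absv !mxE.
by case: sgrP => h; rewrite ?h; lra.
Qed.


Lemma sg_mono (a c : R) : a <= c -> Num.sg a <= Num.sg c.
Proof. by move=> ac; case: sgrP => ha; case: sgrP => hc; lra. Qed.

Definition Ssg (y : 'cV[R]_n) : R := \sum_i Num.sg (y i 0).

Lemma Ssg_ub y : Ssg y <= n%:R.
Proof.
have -> : n%:R = \sum_(i < n) (1:R) by rewrite sumr_const card_ord.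
apply: ler_sum => i _; exact: sg_le1.
Qed.

Lemma Ssg_lb y : - n%:R <= Ssg y.
Proof.
have -> : - n%:R = \sum_(i < n) (-1:R) by rewrite sumr_const card_ord mulNrn.
apply: ler_sum => i _; exact: sg_geN1.
Qed.

Lemma Ssg_incr (y z : 'cV[R]_n) i : (forall j, y j 0 <= z j 0) ->
  Num.sg (z i 0) != Num.sg (y i 0) -> Ssg y + 1 <= Ssg z.
Proof.
move=> Hyz Hi.
have E : Ssg z - Ssg y = \sum_j (Num.sg (z j 0) - Num.sg (y j 0)) by rewrite /Ssg sumrB.
have h1 : Num.sg (y i 0) + 1 <= Num.sg (z i 0).
  by apply: sg_step (Hyz i) _; rewrite eq_sym.
have h2 : 0 <= \sum_(j | j != i) (Num.sg (z j 0) - Num.sg (y j 0)).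
  by apply: sumr_ge0 => j _; rewrite subr_ge0 sg_mono.
move: E; rewrite (bigD1 i) //= => E; lra.
Qed.

End Helpers.
Arguments Ssg {R n}.

Theorem theorem3p1 (R : realFieldType) (n : nat) (A : 'M[R]_n) (b x0 : 'cV[R]_n) :
  (Mmatrix (A - 1%:M)
   \/
   (exists v : 'cV[R]_n,
      [/\ (forall w : 'cV[R]_n, (A^T - 1%:M) *m w = 0 <-> exists c : R, w = c *: v),
          (forall i, 0 < v i 0),
          (forall d : 'rV[R]_n, (forall i, 0 <= d 0 i) -> d != 0 ->
              Mmatrix (A - 1%:M + diag_mx d)),
          Dsign x0 != 1%:M
        & (v^T *m b) 0 0 < 0])) ->
  exists k : nat, [/\ (k <= 2 * n + 2)%N,
    (forall j : nat, (j < k)%N -> A - Dsign (gnm A b x0 j) \in unitmx)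
    & AVE_sol A b (gnm A b x0 k)].
Proof.
move=> Hyp.
have HM : forall k, Mmatrix (A - Dsign (gnm A b x0 k)).
  case: Hyp => [Ha | [v [Hker Hv HMd Hx0 Hvb]]].
    move=> k; rewrite A_Dsign_eq; apply: Mmatrix_add_diag => // i.
    by rewrite mxE subr_ge0 sg_le1.
  have key : forall y, Dsign y != 1%:M -> Mmatrix (A - Dsign y).
    move=> y Hy; rewrite A_Dsign_eq; apply: HMd.
      by move=> i; rewrite mxE subr_ge0 sg_le1.
    apply: contra Hy => /eqP Hd; apply/eqP/Dsign_eq1 => i.
    move/rowP: Hd => /(_ i); rewrite !mxE => /eqP; rewrite subr_eq0 => /eqP <-.
    by [].
  suff H : forall k, Dsign (gnm A b x0 k) != 1%:M by move=> k; apply: key.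
  elim=> [|k IH] //.
  have HMk := key _ IH.
  have Hb : (A - Dsign (gnm A b x0 k)) *m gnm A b x0 k.+1 = b.
    by rewrite /= mulKVmx //; case: HMk.
  apply/negP => /eqP /Dsign_eq1 Hpos.
  have vA : v^T *m A = v^T.
    have : (A^T - 1%:M) *m v = 0 by apply/Hker; exists 1; rewrite scale1r.
    move=> /eqP; rewrite mulmxBl mul1mx subr_eq0 => /eqP H.
    by rewrite -[v^T *m A]trmxK trmx_mul trmxK H.
  have E1 : forall (M N : 'cV[R]_n) i, (M - N) i 0 = M i 0 - N i 0 by move=> *; rewrite !mxE.
  have : (v^T *m b) 0 0 = \sum_i v i 0 * ((1 - Num.sg (gnm A b x0 k i 0)) * gnm A b x0 k.+1 i 0).
    rewrite -{1}Hb mulmxBl mulmxBr mulmxA vA -mulmxBr [LHS]mxE; apply: eq_bigr => i _.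
    by rewrite E1 Dsign_mul mxE mulrBl mul1r.
  move=> E; move: Hvb; rewrite E ltNge => /negP; apply.
  apply: sumr_ge0 => i _; apply: mulr_ge0; first exact: ltW.
  apply: mulr_ge0; first by rewrite subr_ge0 sg_le1.
  by apply: ltW; rewrite -sgr_cp0 Hpos.
have mono : forall k i, gnm A b x0 k.+1 i 0 <= gnm A b x0 k.+2 i 0.
  by move=> k i; apply: (@step_mono _ _ A b (gnm A b x0 k) (HM k) (HM k.+1)).
have sol : forall k, ~ AVE_sol A b (gnm A b x0 k.+1) ->
    exists i, Num.sg (gnm A b x0 k.+1 i 0) != Num.sg (gnm A b x0 k i 0).
  move=> k Hn; case: (boolP [exists i, Num.sg (gnm A b x0 k.+1 i 0) != Num.sg (gnm A b x0 k i 0)]).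
    by move=> /existsP.
  move=> /existsPn H; exfalso; apply: Hn; apply: step_sol; first by case: (HM k).
  by move=> i; apply/eqP; have := H i; rewrite negbK.
have incr : forall k, ~ AVE_sol A b (gnm A b x0 k.+2) ->
    Ssg (gnm A b x0 k.+1) + 1 <= Ssg (gnm A b x0 k.+2).
  move=> k Hn; have [i Hi] := sol k.+1 Hn; exact: (@Ssg_incr R n _ _ i (mono k) Hi).
have [k [Hk Hsol]] : exists k, (k <= 2 * n + 2)%N /\ AVE_sol A b (gnm A b x0 k).
  apply: NNPP => Hno.
  have Hn : forall k, (k <= 2 * n + 2)%N -> ~ AVE_sol A b (gnm A b x0 k).
    by move=> k Hk Hs; apply: Hno; exists k.
  have grow : forall j, (j <= 2 * n + 1)%N ->
      Ssg (gnm A b x0 1) + j%:R <= Ssg (gnm A b x0 j.+1).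
    elim=> [|j IH] Hj; first by rewrite addr0.
    have h1 := IH (ltnW Hj).
    have Hj2 : (j.+2 <= 2 * n + 2)%N by move: Hj; lia.
    have h2 := incr j (Hn j.+2 Hj2).
    rewrite -natr1; lra.
  have := grow _ (leqnn _).
  have := @Ssg_lb R n (gnm A b x0 1); have := @Ssg_ub R n (gnm A b x0 (2 * n + 1).+1).
  rewrite natrD natrM; lra.
exists k; split => // j _; by case: (HM j).
Qed.
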